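(* Let $G=(V,E)$ and $G'=(V,E')$ be graphs and $\lambda>0$. Suppose every pair in $E\setminus E'$ is $(\ell,d)$ connected in $G'$ and every pair in $E'\setminus E$ is $(\ell,d)$ connected in $G$. Then $$D(f_G\|f_{G'})\;\le\;\frac{2\lambda\,|E\,\Delta\,E'|}{1+\dfrac{(1+(\tanh\lambda)^{\ell})^{d}}{(1-(\tanh\lambda)^{\ell})^{d}}}.$$
   Context: For a graph $G=(V,E)$ and $\lambda>0$, $f_G(\mathbf{x})=\frac{1}{Z}\exp\big(\sum_{(i,j)\in E}\lambda x_ix_j\big)$ on $\{-1,+1\}^V$. $D(f\|g)=\sum_x f(x)\log(f(x)/g(x))$ is the KL-divergence; $E\Delta E'$ is the symmetric difference. Two nodes are $(\ell,d)$ connected if there are $d$ node-disjoint paths between them, each of length at most $\ell$. *)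

(* Defs.v *)
From HB Require Import structures.
From mathcomp Require Import all_boot all_order all_algebra.
From mathcomp Require Import all_classical all_reals all_analysis.
Set Implicit Arguments. Unset Strict Implicit. Unset Printing Implicit Defensive.
Import Order.TTheory GRing.Theory Num.Theory.
Local Open Scope ring_scope.

Definition simple_graph (V : finType) (E : {set {set V}}) : Prop :=
  forall e, e \in E -> #|e| = 2%N.

Definition adj (V : finType) (E : {set {set V}}) : rel V :=
  fun u v => (u != v) && ([set u; v] \in E).

Definition spin (R : realType) (b : bool) : R := if b then 1 else -1.

Definition ising_weight (R : realType) (V : finType) (E : {set {set V}})
  (lam : R) (x : {ffun V -> bool}) : R :=
  expR (\sum_(e in E) lam * \prod_(i in e) spin R (x i)).

Definition partition_fn (R : realType) (V : finType) (E : {set {set V}})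
  (lam : R) : R := \sum_(x : {ffun V -> bool}) ising_weight E lam x.

Definition ising (R : realType) (V : finType) (E : {set {set V}}) (lam : R)
  (x : {ffun V -> bool}) : R := ising_weight E lam x / partition_fn E lam.

Definition KL (R : realType) (V : finType) (f g : {ffun V -> bool} -> R) : R :=
  \sum_(x : {ffun V -> bool}) f x * ln (f x / g x).

Definition tanh (R : realType) (x : R) : R :=
  (expR x - expR (- x)) / (expR x + expR (- x)).

(* Its length (number of edges) is size p. *)
Definition is_path (V : finType) (E : {set {set V}}) (u v : V) (p : seq V) : bool :=
  [&& path (adj E) u p, last u p == v & uniq (u :: p)].

Definition interior (V : finType) (u v : V) (p : seq V) : seq V :=
  [seq x <- p | (x != u) && (x != v)].

Definition ld_connected (V : finType) (E : {set {set V}}) (l d : nat) (u v : V) : Prop :=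
  exists P : 'I_d -> seq V,
    [/\ forall k, is_path E u v (P k),
        forall k, (size (P k) <= l)%N,
        injective P &
        forall k k', k != k' -> forall x, x \in interior u v (P k) -> x \notin interior u v (P k')].

Definition symdiff (V : finType) (E E' : {set {set V}}) : {set {set V}} :=
  (E :\: E') :|: (E' :\: E).

(* Main.v *)
Require Import Defs.
From HB Require Import structures.
From mathcomp Require Import all_boot all_order all_algebra.
From mathcomp Require Import all_classical all_reals all_analysis.
From mathcomp Require Import ring lra.
Import Order.TTheory GRing.Theory Num.Theory.
Local Open Scope ring_scope.
Set Implicit Arguments. Unset Strict Implicit. Unset Printing Implicit Defensive.

Section Spins.
Variable R : realType.
Variable V : finType.
Local Notation cfg := {ffun V -> bool}.

Definition sp (x : cfg) (i : V) : R := spin R (x i).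
Definition es (e : {set V}) (x : cfg) : R := \prod_(i in e) sp x i.
Definition mono (m : V -> nat) (x : cfg) : R := \prod_(i : V) sp x i ^+ m i.

Lemma spin_sq b : spin R b * spin R b = 1.
Proof. by case: b => /=; rewrite ?mulr1 ?mulrNN ?mulr1. Qed.

Lemma spin_neg b : spin R (~~ b) = - spin R b.
Proof. by case: b => /=; rewrite ?opprK. Qed.

Lemma spin_eq a b : spin R (a == b) = spin R a * spin R b.
Proof. by case: a; case: b => /=; rewrite ?mulr1 ?mul1r ?mulrNN ?mulr1 ?mulN1r. Qed.

Lemma sp_sq x i : sp x i * sp x i = 1.
Proof. exact: spin_sq. Qed.

Lemma sum_mono_ge0 m : 0 <= \sum_(x : cfg) mono m x.
Proof.
rewrite /mono /sp.
have -> : \sum_(x : cfg) \prod_(i : V) spin R (x i) ^+ m i =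
          \prod_(i : V) \sum_(b : bool) spin R b ^+ m i.
  by rewrite bigA_distr_bigA.
apply: prodr_ge0 => i _.
rewrite big_bool /= expr1n.
rewrite -signr_odd; case: (odd (m i)) => /=; rewrite ?expr0 ?expr1.
- by rewrite subrr.
- by [].
Qed.

Lemma monoM m1 m2 x : mono m1 x * mono m2 x = mono (fun i => (m1 i + m2 i)%N) x.
Proof. by rewrite /mono -big_split /=; apply: eq_bigr => i _; rewrite exprD. Qed.

Lemma es_mono e x : es e x = mono (fun i => nat_of_bool (i \in e)) x.
Proof.
rewrite /es /mono big_mkcond /=; apply: eq_bigr => i _.
by case: (i \in e); rewrite ?expr1 ?expr0.
Qed.

Lemma pos_prod (T : Type) (r : seq T) (c d : T -> R) (ms : T -> V -> nat) m :
  (forall i, 0 <= c i) -> (forall i, 0 <= d i) ->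
  0 <= \sum_(x : cfg) (\prod_(i <- r) (c i + d i * mono (ms i) x)) * mono m x.
Proof.
move=> c0 d0; elim: r m => [|a r IH] m.
  by under eq_bigr do rewrite big_nil mul1r; exact: sum_mono_ge0.
have E : forall x : cfg, (\prod_(i <- a :: r) (c i + d i * mono (ms i) x)) * mono m x =
   c a * ((\prod_(i <- r) (c i + d i * mono (ms i) x)) * mono m x) +
   d a * ((\prod_(i <- r) (c i + d i * mono (ms i) x)) * mono (fun i => (ms a i + m i)%N) x).
  move=> x; rewrite big_cons -monoM; set P := \prod_(i <- r) _; ring.
under eq_bigr do rewrite E.
rewrite big_split /= -!mulr_sumr.
by apply: addr_ge0; apply: mulr_ge0 => //; apply: IH.
Qed.

End Spins.
Section Flip.
Variable R : realType.
Variable V : finType.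
Local Notation cfg := {ffun V -> bool}.
Local Notation sp := (@sp R V).

Definition flipv (w : V) (x : cfg) : cfg := [ffun i => if i == w then ~~ x i else x i].

Lemma flipvK w : involutive (flipv w).
Proof.
move=> x; apply/ffunP => i; rewrite !ffunE.
by case: (i == w) => //; rewrite negbK.
Qed.

Lemma sum_flip w (F : cfg -> R) : \sum_x F x = \sum_x F (flipv w x).
Proof. by rewrite (reindex_inj (inv_inj (flipvK w))). Qed.

Lemma sp_flip_ne w x a : a != w -> sp (flipv w x) a = sp x a.
Proof. by move=> aw; rewrite /sp ffunE (negbTE aw). Qed.

Lemma sp_flip w x : sp (flipv w x) w = - sp x w.
Proof. by rewrite /sp ffunE eqxx spin_neg. Qed.

Definition indep w (f : cfg -> R) := forall x, f (flipv w x) = f x.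

Lemma indep_sp w a : a != w -> indep w (fun x => sp x a).
Proof. by move=> aw x; rewrite sp_flip_ne. Qed.

Lemma indepM w f g : indep w f -> indep w g -> indep w (fun x => f x * g x).
Proof. by move=> hf hg x; rewrite hf hg. Qed.

Lemma indepD w f g : indep w f -> indep w g -> indep w (fun x => f x + g x).
Proof. by move=> hf hg x; rewrite hf hg. Qed.

Lemma indepC w (c : R) : indep w (fun _ => c).
Proof. by []. Qed.

Lemma sp_sq' x i : sp x i * sp x i = 1.
Proof. exact: sp_sq. Qed.

Lemma vsum w a b (t1 t2 : R) (G : cfg -> R) :
  a != w -> b != w -> indep w G ->
  \sum_x (1 + t1 * sp x a * sp x w) * (1 + t2 * sp x w * sp x b) * G x =
  \sum_x (1 + t1 * t2 * sp x a * sp x b) * G x.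
Proof.
move=> aw bw hG.
set F := fun x => (1 + t1 * sp x a * sp x w) * (1 + t2 * sp x w * sp x b) * G x.
have -> : \sum_x F x = (\sum_x F x + \sum_x F (flipv w x)) / 2.
  by rewrite -sum_flip; field.
rewrite -big_split /= mulr_suml; apply: eq_bigr => x _.
rewrite /F hG (sp_flip_ne x aw) (sp_flip_ne x bw) sp_flip.
have hs := sp_sq' x w.
set s := sp x w in hs *; set A := sp x a; set B := sp x b.
have -> : (1 + t1 * A * s) * (1 + t2 * s * B) * G x +
  (1 + t1 * A * - s) * (1 + t2 * - s * B) * G x =
  2 * (1 + t1 * t2 * A * B * (s * s)) * G x by ring.
by rewrite hs mulr1; field.
Qed.

Fixpoint pw (a : V) (p : seq (V * R)) (x : cfg) : R :=
  if p is (b, tau) :: p' then (1 + tau * sp x a * sp x b) * pw b p' x else 1.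

Fixpoint ptau (p : seq (V * R)) : R :=
  if p is (_, tau) :: p' then tau * ptau p' else 1.

Lemma indep_pw w a p : w \notin a :: map fst p -> indep w (pw a p).
Proof.
elim: p a => [|[b tau] p IH] a /=; first by [].
rewrite !inE !negb_or => /and3P[wa wb wp].
move=> x; rewrite /= IH; last by rewrite inE negb_or wb.
by rewrite eq_sym in wa; rewrite eq_sym in wb; rewrite (sp_flip_ne x wa) (sp_flip_ne x wb).
Qed.

Lemma reduce_path (q : seq (V * R)) a b tau (F : cfg -> R) :
  uniq (a :: b :: map fst q) ->
  (forall w, w \in b :: map fst q -> w != last b (map fst q) -> indep w F) ->
  \sum_x pw a ((b, tau) :: q) x * F x =
  \sum_x (1 + ptau ((b, tau) :: q) * sp x a * sp x (last b (map fst q))) * F x.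
Proof.
elim: q b tau => [|[c t2] q IH] b tau.
  by move=> _ _; apply: eq_bigr => x _; rewrite /= !mulr1.
move=> U hF.
have U' : uniq (a :: c :: map fst q).
  move: U => /= /andP[]; rewrite !inE !negb_or => /and3P[_ -> ->] /andP[_ ->].
  by [].
have hb : indep b F.
  apply: hF; first by rewrite inE eqxx.
  apply/eqP => E; move: U => /= /andP[_ /andP[]]; rewrite inE negb_or.
  rewrite E /= => /andP[h1 h2] _; move: h1 h2.
  by have := mem_last c [seq i.1 | i <- q]; rewrite inE => /orP[/eqP->|->] //; rewrite eqxx.
transitivity (\sum_x (1 + tau * sp x a * sp x b) * (1 + t2 * sp x b * sp x c) * (pw c q x * F x)).
  by apply: eq_bigr => x _; rewrite /= !mulrA.
rewrite vsum; last first.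
- apply: indepM => //; apply: indep_pw.
  by move: U => /= /andP[_ /andP[]]; rewrite inE.
- by move: U => /= /and3P[_]; rewrite inE negb_or eq_sym => /andP[].
- by move: U => /= /andP[]; rewrite inE negb_or => /andP[].
transitivity (\sum_x pw a ((c, tau * t2) :: q) x * F x).
  by apply: eq_bigr => x _; rewrite /= !mulrA.
rewrite IH //=; last first.
  move=> w wq wl; apply: hF => //; first by rewrite inE wq orbT.
rewrite mulrA.
by [].
Qed.

End Flip.
Section Multi.
Variable R : realType.
Variable V : finType.
Local Notation cfg := {ffun V -> bool}.
Local Notation sp := (@sp R V).
Local Notation pw := (@pw R V).
Local Notation indep := (@indep R V).

Definition ppw (t : R) (a : V) (p : seq V) := pw a (map (fun b => (b, t)) p).

Lemma map_fst_pair (t : R) (p : seq V) : map fst (map (fun b => (b, t)) p) = p.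
Proof. by elim: p => //= b p ->. Qed.

Lemma ptau_pair (t : R) (p : seq V) : ptau (map (fun b => (b, t)) p) = t ^+ size p.
Proof. by elim: p => [|b p IH] /=; rewrite ?expr0 // IH exprS. Qed.

Lemma indep_ppw t w a p : w \notin a :: p -> indep w (ppw t a p).
Proof. by move=> h; apply: indep_pw; rewrite map_fst_pair. Qed.

Lemma ppw_reduce t a p (F : cfg -> R) :
  p != [::] -> uniq (a :: p) ->
  (forall w, w \in p -> w != last a p -> indep w F) ->
  \sum_x ppw t a p x * F x = \sum_x (1 + t ^+ size p * sp x a * sp x (last a p)) * F x.
Proof.
case: p => [|b q] // _ U hF.
rewrite /ppw /= reduce_path; last first.
- by move=> w; rewrite map_fst_pair => wq wl; apply: hF.
- by rewrite map_fst_pair.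
by apply: eq_bigr => x _; rewrite map_fst_pair /= ptau_pair exprS.
Qed.

Definition disj (v : V) (p q : seq V) :=
  all (fun w => (w == v) || (w \notin q)) p && all (fun w => (w == v) || (w \notin p)) q.

Lemma indep_prod (T : eqType) (w : V) (L : seq T) (F : T -> cfg -> R) :
  (forall q, q \in L -> indep w (F q)) -> indep w (fun x => \prod_(q <- L) F q x).
Proof.
elim: L => [|a L IH] hF x; first by rewrite !big_nil.
rewrite !big_cons hF ?mem_head //; congr (_ * _).
by apply: IH => q qL; apply: hF; rewrite inE qL orbT.
Qed.

Lemma multi (t : R) (L : seq (seq V)) u v (h : cfg -> R) :
  (forall p, p \in L -> [&& p != [::], last u p == v & uniq (u :: p)]) ->
  pairwise (disj v) L ->
  (forall p, p \in L -> forall w, w \in p -> w != v -> indep w h) ->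
  \sum_x (\prod_(p <- L) ppw t u p x) * h x =
  \sum_x (\prod_(p <- L) (1 + t ^+ size p * (sp x u * sp x v))) * h x.
Proof.
elim: L h => [|p L IH] h hL hP hh.
  by apply: eq_bigr => x _; rewrite !big_nil.
move: hP; rewrite pairwise_cons => /andP[/allP hd hP].
have /and3P[pn /eqP pl pu] := hL p (mem_head _ _).
have hwu : forall q, q \in p :: L -> forall w, w \in q -> w != u.
  move=> q qL w wq; apply/eqP => E; move: (hL q qL) => /and3P[_ _].
  by rewrite /= -E wq.
have hwq : forall w, w \in p -> w != v -> forall q, q \in L -> w \notin u :: q.
  move=> w wp wv q qL; rewrite inE negb_or (hwu p (mem_head _ _) w wp) /=.
  have /andP[/allP h1 _] := hd q qL.
  by have := h1 w wp; rewrite (negbTE wv).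
transitivity (\sum_x ppw t u p x * ((\prod_(q <- L) ppw t u q x) * h x)).
  by apply: eq_bigr => x _; rewrite big_cons mulrA.
rewrite ppw_reduce //; last first.
  move=> w wp; rewrite pl => wv.
  apply: indepM; last by apply: (hh p (mem_head _ _)).
  apply: indep_prod => q qL; apply: indep_ppw.
  exact: hwq.
rewrite pl.
transitivity (\sum_x (\prod_(q <- L) ppw t u q x) * ((1 + t ^+ size p * (sp x u * sp x v)) * h x)).
  by apply: eq_bigr => x _; set P := \prod_(q <- L) _; ring.
rewrite IH.
- by apply: eq_bigr => x _; rewrite big_cons; set P := \prod_(q <- L) _; ring.
- by move=> q qL; apply: hL; rewrite inE qL orbT.
- by [].
move=> q qL w wq wv; apply: indepM; last by apply: (hh q); rewrite ?inE ?qL ?orbT.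
have wu : w != u by apply: (hwu q); rewrite ?inE ?qL ?orbT.
apply: indepD; first exact: indepC.
apply: indepM; first exact: indepC.
by apply: indepM; apply: indep_sp; rewrite eq_sym.
Qed.

End Multi.
Section Final.
Variable R : realType.
Variable V : finType.
Local Notation cfg := {ffun V -> bool}.
Local Notation sp := (@sp R V).

Lemma prod_seq_scale (T : Type) (r : seq T) (k : R) (F : T -> R) :
  \prod_(i <- r) (k * F i) = k ^+ size r * \prod_(i <- r) F i.
Proof.
elim: r => [|a r IH]; first by rewrite !big_nil mul1r.
by rewrite !big_cons IH /= exprS; ring.
Qed.

Lemma sp_pm x i : sp x i = 1 \/ sp x i = -1.
Proof. by rewrite /sp /spin; case: (x i); [left|right]. Qed.

Lemma key_ineq (T : eqType) (r : seq T) (a : T -> R) (s : R) :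
  0 <= s <= 1 -> (forall i, i \in r -> s <= a i <= 1) ->
  \prod_(i <- r) (1 - a i) * ((1 + s) ^+ size r / (1 - s) ^+ size r) <=
  \prod_(i <- r) (1 + a i).
Proof.
move=> /andP[s0 s1] ha.
have D0 : 0 <= (1 - s) ^+ size r by apply: exprn_ge0; lra.
have Pm0 : 0 <= \prod_(i <- r) (1 - a i).
  by rewrite big_seq; apply: prodr_ge0 => i ir; have := ha i ir; lra.
have Pp0 : 0 <= \prod_(i <- r) (1 + a i).
  by rewrite big_seq; apply: prodr_ge0 => i ir; have := ha i ir; lra.
case: (eqVneq ((1 - s) ^+ size r) 0) => [-> | Dn0].
  by rewrite invr0 mulr0 mulr0.
have Dp : 0 < (1 - s) ^+ size r by rewrite lt_def Dn0 D0.
rewrite mulrA ler_pdivrMr //.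
rewrite ![_ * (_ ^+ size r)]mulrC -!prod_seq_scale.
rewrite big_seq [X in _ <= X]big_seq.
apply: ler_prod => i ir; have := ha i ir => hi.
apply/andP; split; first by apply: mulr_ge0; lra.
nra.
Qed.

Lemma final_bound (T : eqType) (r : seq T) (a : T -> R) (s : R) (u v : V) :
  u != v -> 0 <= s <= 1 -> (forall i, i \in r -> s <= a i <= 1) ->
  (1 - 2 / (1 + (1 + s) ^+ size r / (1 - s) ^+ size r)) *
    \sum_x \prod_(i <- r) (1 + a i * (sp x u * sp x v)) <=
  \sum_x \prod_(i <- r) (1 + a i * (sp x u * sp x v)) * (sp x u * sp x v).
Proof.
move=> uv hs ha.
set rr := (1 + s) ^+ size r / (1 - s) ^+ size r.
have rr0 : 0 <= rr.
  by rewrite /rr; apply: divr_ge0; apply: exprn_ge0; case/andP: hs => ? ?; lra.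
set c := 1 - 2 / (1 + rr).
set Pp := \prod_(i <- r) (1 + a i).
set Pm := \prod_(i <- r) (1 - a i).
have key : Pm * rr <= Pp by apply: key_ineq.
rewrite -subr_ge0 mulr_sumr -sumrB.
set G := fun x : cfg => \prod_(i <- r) (1 + a i * (sp x u * sp x v)) * (sp x u * sp x v) -
     c * \prod_(i <- r) (1 + a i * (sp x u * sp x v)).
rewrite -/(G _).
have -> : \sum_x G x = (\sum_x G x + \sum_x G (flipv u x)) / 2.
  by rewrite -sum_flip; field.
rewrite -big_split /=; apply: divr_ge0 => //; apply: sumr_ge0 => x _.
have vu : v != u by rewrite eq_sym.
rewrite /G (sp_flip_ne _ x vu).
rewrite sp_flip.
have main : 0 <= Pp * (1 - c) - Pm * (1 + c).
  have rr1 : 1 + rr != 0 by apply/eqP => h; lra.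
  have -> : Pp * (1 - c) - Pm * (1 + c) = 2 / (1 + rr) * (Pp - Pm * rr).
    by rewrite /c; field.
  apply: mulr_ge0; last by lra.
  by apply: divr_ge0; lra.
rewrite mulNr.
have E1 : \prod_(i <- r) (1 + a i * 1) = Pp by apply: eq_bigr => i _; rewrite mulr1.
have E2 : \prod_(i <- r) (1 + a i * - 1) = Pm by apply: eq_bigr => i _; rewrite mulrN1.
have hsg : sp x u * sp x v = 1 \/ sp x u * sp x v = -1.
  by have [->|->] := sp_pm x u; have [->|->] := sp_pm x v; rewrite ?mulr1 ?mul1r ?mulN1r ?opprK; by [left|right].
case: hsg => ->; rewrite ?opprK E1 E2; lra.
Qed.

End Final.
Section Mono.
Variable R : realType.
Variable V : finType.
Local Notation cfg := {ffun V -> bool}.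
Local Notation sp := (@sp R V).
Local Notation es := (@es R V).
Local Notation mono := (@mono R V).

Lemma iwE (E : {set {set V}}) (lam : R) x :
  ising_weight E lam x = expR (\sum_(e in E) lam * es e x).
Proof. by []. Qed.

Lemma es_sq e x : es e x * es e x = 1.
Proof.
rewrite /es -big_split /=; apply: big1 => i _; exact: sp_sq.
Qed.

Lemma es_pm e x : es e x = 1 \/ es e x = -1.
Proof.
have := es_sq e x; rewrite -expr2 => /eqP; rewrite sqrf_eq1 => /orP[] /eqP; by [left|right].
Qed.

Lemma es_le1 e x : es e x <= 1.
Proof. by case: (es_pm e x) => ->; lra. Qed.

Lemma es_geN1 e x : -1 <= es e x.
Proof. by case: (es_pm e x) => ->; lra. Qed.

Definition xn (x z : cfg) : cfg := [ffun i => x i == z i].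

Lemma xn_inj x : injective (xn x).
Proof.
move=> z1 z2 /ffunP h; apply/ffunP => i; have := h i; rewrite !ffunE.
by case: (x i); case: (z1 i); case: (z2 i).
Qed.

Lemma es_xn e x z : es e (xn x z) = es e x * es e z.
Proof.
rewrite /es -big_split /=; apply: eq_bigr => i _.
by rewrite /sp ffunE spin_eq.
Qed.

Definition ch (a : R) := (expR a + expR (- a)) / 2.
Definition sh (a : R) := (expR a - expR (- a)) / 2.

Lemma expR_pm (s a : R) : s = 1 \/ s = -1 -> expR (s * a) = ch a + sh a * s.
Proof.
by move=> [] ->; rewrite /ch /sh ?mul1r ?mulN1r; field.
Qed.

Lemma sh_ge0 a : 0 <= a -> 0 <= sh a.
Proof.
move=> a0; rewrite /sh; apply: divr_ge0 => //; rewrite subr_ge0.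
by rewrite ler_expR; lra.
Qed.

Lemma ch_ge0 a : 0 <= ch a.
Proof. by rewrite /ch; apply: divr_ge0 => //; apply: addr_ge0; apply: expR_ge0. Qed.

Lemma mono_corr (E S : {set {set V}}) (lam : R) (A : {set V}) :
  0 <= lam -> S \subset E ->
  0 <= (\sum_x ising_weight E lam x * es A x) * (\sum_y ising_weight S lam y) -
       (\sum_x ising_weight E lam x) * (\sum_y ising_weight S lam y * es A y).
Proof.
move=> lam0 SE.
set wE := ising_weight E lam; set wS := ising_weight S lam.
have -> : (\sum_x wE x * es A x) * (\sum_y wS y) - (\sum_x wE x) * (\sum_y wS y * es A y) =
  \sum_x \sum_y wE x * wS y * (es A x - es A y).
  rewrite !mulr_suml -sumrB; apply: eq_bigr => x _.
  rewrite !mulr_sumr -sumrB; apply: eq_bigr => y _; ring.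
have -> : \sum_x \sum_y wE x * wS y * (es A x - es A y) =
  \sum_x \sum_z wE x * wS (xn x z) * (es A x - es A (xn x z)).
  apply: eq_bigr => x _; have xi : injective (xn x) by apply: xn_inj.
  by rewrite (reindex_inj xi).
rewrite exchange_big /=; apply: sumr_ge0 => z _.
set a := fun e : {set V} => lam + (if e \in S then lam * es e z else 0).
have a0 : forall e, 0 <= a e.
  move=> e; rewrite /a; case: (e \in S); last by rewrite addr0.
  by have := es_geN1 e z; nra.
have W : forall x, wE x * wS (xn x z) = \prod_(e <- enum E) (ch (a e) + sh (a e) * es e x).
  move=> x; rewrite /wE /wS !iwE -expRD big_enum /=.
  have -> : \sum_(e in S) lam * es e (xn x z) =
            \sum_(e in E) (if e \in S then es e x * (lam * es e z) else 0).
    rewrite -big_mkcondr /=; apply: eq_big => e.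
      by apply/idP/andP => [eS|[]//]; split => //; by move/fintype.subsetP: SE; apply.
    by move=> _; rewrite es_xn; ring.
  rewrite -big_split /= expR_sum; apply: eq_bigr => e _.
  rewrite -expR_pm; last exact: es_pm.
  by congr expR; rewrite /a; case: (e \in S); ring.
have -> : \sum_x wE x * wS (xn x z) * (es A x - es A (xn x z)) =
  (1 - es A z) * \sum_x (\prod_(e <- enum E) (ch (a e) + sh (a e) *
       mono (fun i => nat_of_bool (i \in e)) x)) * mono (fun i => nat_of_bool (i \in A)) x.
  rewrite mulr_sumr; apply: eq_bigr => x _; rewrite W es_xn -es_mono.
  under [X in _ = _ * (X * _)]eq_bigr do rewrite -es_mono.
  ring.
apply: mulr_ge0; first by have := es_le1 A z; lra.
apply: pos_prod => e; [exact: ch_ge0 | exact: sh_ge0].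
Qed.

End Mono.
Section Paths.
Variable R : realType.
Variable V : finType.
Local Notation cfg := {ffun V -> bool}.
Local Notation sp := (@sp R V).
Local Notation es := (@es R V).

Fixpoint pedges (a : V) (p : seq V) : seq {set V} :=
  if p is b :: p' then [set a; b] :: pedges b p' else [::].

Lemma pedges_in (E : {set {set V}}) a p e :
  path (adj E) a p -> e \in pedges a p -> e \in E.
Proof.
elim: p a => [|b p IH] a //=; case/andP => /andP[_ hab] hp.
by rewrite inE => /orP[/eqP -> //|]; apply: IH.
Qed.

Lemma pedges_sub a p e y : e \in pedges a p -> y \in e -> y \in a :: p.
Proof.
elim: p a => [|b p IH] a //=; rewrite inE => /orP[/eqP ->|].
  by rewrite !inE => /orP[->|->]; rewrite ?orbT.
by move=> he hy; have := IH _ he hy; rewrite !inE => ->; rewrite orbT.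
Qed.

Lemma pedges_uniq a p : uniq (a :: p) -> uniq (pedges a p).
Proof.
elim: p a => [|b p IH] a //= /andP[]; rewrite inE negb_or => /andP[ab ap] hu.
rewrite IH // andbT; apply/negP => he.
have aab : a \in [set a; b] by rewrite !inE eqxx.
have := pedges_sub he aab; rewrite inE (negbTE ab) /=.
by rewrite (negbTE ap).
Qed.

Lemma pedges_form a p e : uniq (a :: p) -> e \in pedges a p ->
  exists x y, x != y /\ e = [set x; y].
Proof.
elim: p a => [|b p IH] a //= /andP[]; rewrite inE negb_or => /andP[ab ap] hu.
rewrite inE => /orP[/eqP ->|]; first by exists a, b.
by apply: IH.
Qed.

Lemma pedges_direct a v p : uniq (a :: p) -> a != v -> last a p = v ->
  [set a; v] \in pedges a p -> p = [:: v].
Proof.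
case: p => [|b p] //= /andP[]; rewrite inE negb_or => /andP[ab ap] hu av hl.
rewrite inE => /orP[/eqP h|h]; last first.
  have aav : a \in [set a; v] by rewrite !inE eqxx.
  by have := pedges_sub h aav; rewrite inE (negbTE ab) (negbTE ap).
have vb : v = b.
  have : v \in [set a; b] by rewrite -h !inE eqxx orbT.
  by rewrite !inE (eq_sym v a) (negbTE av) => /eqP.
rewrite vb in hl *; clear h; case: p hl hu ap => [|c p] //= hl /andP[]; rewrite inE negb_or => /andP[bc bp] _ _.
move: (mem_last c p); rewrite hl inE => /orP[/eqP E|].
  by rewrite E eqxx in bc.
by rewrite (negbTE bp).
Qed.

Lemma pedges_cross (u v : V) (p q : seq V) (e : {set V}) : u != v ->
  uniq (u :: p) -> uniq (u :: q) -> last u p = v -> last u q = v ->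
  (forall x, x \in Defs.interior u v p -> x \notin Defs.interior u v q) ->
  e \in pedges u p -> e \in pedges u q -> p = [:: v] /\ q = [:: v].
Proof.
move=> uv up uq lp lq hint ep eq.
have [x [y [xy ex]]] := pedges_form up ep.
have inuv : forall z, z \in e -> (z == u) || (z == v).
  move=> z ze; apply/negPn/negP; rewrite negb_or => /andP[zu zv].
  have zp : z \in p by have := pedges_sub ep ze; rewrite inE (negbTE zu).
  have zq : z \in q by have := pedges_sub eq ze; rewrite inE (negbTE zu).
  have := hint z; rewrite !mem_filter zu zv zp zq /=.
  by move=> /(_ isT).
have euv : e = [set u; v].
  have := inuv x; have := inuv y; rewrite ex !inE !eqxx orbT /= => /(_ isT) hy /(_ isT) hx.
  case/orP: hx => /eqP hx; case/orP: hy => /eqP hy; subst x y.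
  - by rewrite eqxx in xy.
  - by [].
  - by apply/setP => w; rewrite !inE orbC.
  - by rewrite eqxx in xy.
rewrite euv in ep eq.
by split; [exact: (pedges_direct up uv lp ep) | exact: (pedges_direct uq uv lq eq)].
Qed.

Lemma es_pair a b x : a != b -> es [set a; b] x = sp x a * sp x b.
Proof.
move=> ab; rewrite /es (big_setD1 a) ?inE ?eqxx //=.
rewrite (big_setD1 b) ?inE ?eqxx ?orbT ?andbT 1?eq_sym //=.
rewrite big_pred0 ?mulr1 // => i; rewrite !inE.
by case: (i == b); case: (i == a).
Qed.

Lemma pedges_ppw (t : R) a p x : uniq (a :: p) ->
  \prod_(e <- pedges a p) (1 + t * es e x) = ppw t a p x.
Proof.
elim: p a => [|b p IH] a; first by rewrite big_nil.
move=> /= /andP[]; rewrite inE negb_or => /andP[ab _] hu.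
rewrite big_cons IH // es_pair // /ppw /= mulrA.
by [].
Qed.

End Paths.
Section Corr.
Variable R : realType.
Variable V : finType.
Local Notation cfg := {ffun V -> bool}.
Local Notation sp := (@sp R V).
Local Notation es := (@es R V).

Lemma tanh_bounds (lam : R) : 0 < lam -> 0 <= tanh lam <= 1.
Proof.
move=> l0; rewrite /tanh.
have e1 : expR (- lam) < expR lam by rewrite ltr_expR; lra.
have e2 := expR_gt0 (- lam).
apply/andP; split.
  by apply: divr_ge0; lra.
by rewrite ler_pdivrMr; lra.
Qed.

Lemma expR_tanh (lam s : R) : 0 < lam -> s = 1 \/ s = -1 ->
  expR (lam * s) = ch lam * (1 + tanh lam * s).
Proof.
move=> l0 hs; rewrite mulrC expR_pm // /ch /sh /tanh.
have e2 := expR_gt0 (- lam); have e1 := expR_gt0 lam.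
by field; lra.
Qed.

Lemma ch_gt0 (a : R) : 0 < ch a.
Proof. by rewrite /ch; apply: divr_gt0 => //; apply: addr_gt0; apply: expR_gt0. Qed.

Lemma sum_pos (F : cfg -> R) : (forall x, 0 < F x) -> 0 < \sum_x F x.
Proof.
move=> hF; rewrite (bigD1 [ffun=> true]) //=.
apply: ltr_wpDr; last exact: hF.
by apply: sumr_ge0 => x _; apply: ltW.
Qed.

Lemma uniq_flatten_map (T X : eqType) (r : seq T) (f : T -> seq X) :
  uniq r -> (forall i, uniq (f i)) ->
  (forall i j, i \in r -> j \in r -> i != j -> forall e, e \in f i -> e \notin f j) ->
  uniq (flatten (map f r)).
Proof.
elim: r => [|a r IH] //= /andP[ar ur] uf hd.
rewrite cat_uniq uf IH //=; last first.
  by move=> i j ir jr; apply: hd; rewrite inE ?ir ?jr orbT.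
rewrite andbT; apply/hasPn => e /flattenP[s /mapP[k kr ->] ek].
apply: (hd k a); rewrite ?inE ?kr ?eqxx ?orbT //.
by apply: contraNneq ar => <-.
Qed.

Lemma pairwise_map_idx (T X : eqType) (r : seq T) (f : T -> X) (rel : rel X) :
  uniq r -> (forall i j, i \in r -> j \in r -> i != j -> rel (f i) (f j)) ->
  pairwise rel (map f r).
Proof.
elim: r => [|a r IH] //= /andP[ar ur] hd.
rewrite IH ?andbT //; last by move=> i j ir jr; apply: hd; rewrite inE ?ir ?jr orbT.
apply/allP => y /mapP[k kr ->]; apply: hd; rewrite ?inE ?kr ?eqxx ?orbT //.
by apply: contraNneq ar => ->.
Qed.

Lemma corr_lb (E : {set {set V}}) (lam : R) l d (u v : V) :
  0 < lam -> u != v -> ld_connected E l d u v ->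
  1 - 2 / (1 + (1 + tanh lam ^+ l) ^+ d / (1 - tanh lam ^+ l) ^+ d) <=
  \sum_x ising E lam x * es [set u; v] x.
Proof.
move=> lam0 uv [P [hp hs hinj hint]].
set t := tanh lam.
have /andP[t0 t1] := tanh_bounds lam0.
set r := enum 'I_d.
set L := map P r.
set EL := flatten (map (fun k => pedges u (P k)) r).
set S := [set e | e \in EL].
have hP : forall k, [&& P k != [::], last u (P k) == v & uniq (u :: P k)].
  move=> k; have /and3P[_ hl hu] := hp k; rewrite hl hu !andbT.
  by apply/eqP => E0; move: hl; rewrite E0 /= => /eqP hh; rewrite hh eqxx in uv.
have hL : forall p, p \in L -> [&& p != [::], last u p == v & uniq (u :: p)].
  by move=> p /mapP[k _ ->]; exact: hP.
have hdisj : pairwise (disj v) L.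
  apply: pairwise_map_idx; first exact: enum_uniq.
  move=> k k' _ _ kk'.
  have H : forall k k', k != k' -> all (fun w => (w == v) || (w \notin P k')) (P k).
    move=> k1 k2 k12; apply/allP => w wk.
    case: (eqVneq w v) => //= wv.
    have /and3P[_ _ hu] := hP k1.
    have wu : w != u by move: hu => /andP[hu1 _]; apply: contraNneq hu1 => <-.
    have := hint k1 k2 k12 w; rewrite !mem_filter wu wv wk /= => /(_ isT).
    by [].
  by rewrite /disj H // H // eq_sym.
have SE : S \subset E.
  apply/fintype.subsetP => e; rewrite inE => /flattenP[s' /mapP[k _ ->] he].
  have /and3P[hpa _ _] := hp k.
  exact: pedges_in hpa he.
have ELu : uniq EL.
  apply: uniq_flatten_map; first exact: enum_uniq.
    by move=> k; apply: pedges_uniq; have /and3P[_ _ ->] := hP k.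
  move=> k k' _ _ kk' e ek; apply/negP => ek'.
  have /and3P[_ /eqP l1 u1] := hP k; have /and3P[_ /eqP l2 u2] := hP k'.
  have [e1 e2] := pedges_cross uv u1 u2 l1 l2 (hint k k' kk') ek ek'.
  by move: kk'; rewrite (hinj k k') ?eqxx // e1 e2.
set K := ch lam ^+ size EL.
have K0 : 0 < K by apply: exprn_gt0; apply: ch_gt0.
have wS : forall y, ising_weight S lam y = K * \prod_(p <- L) ppw t u p y.
  move=> y; rewrite iwE expR_sum.
  have -> : \prod_(e in S) expR (lam * es e y) = \prod_(e <- EL) expR (lam * es e y).
    by rewrite big_uniq //; apply: eq_bigl => e; rewrite inE.
  under eq_bigr do rewrite (expR_tanh lam0 (es_pm _ _ _)).
  rewrite prod_seq_scale -/K; congr (_ * _).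
  rewrite big_flatten /= big_map /L big_map; apply: eq_bigr => k _.
  by apply: pedges_ppw; have /and3P[_ _ ->] := hP k.
set Dt := \sum_x \prod_(p <- L) ppw t u p x.
set Nt := \sum_x \prod_(p <- L) ppw t u p x * es [set u; v] x.
have DS : \sum_y ising_weight S lam y = K * Dt.
  by rewrite /Dt mulr_sumr; apply: eq_bigr => y _; rewrite wS.
have NS : \sum_y ising_weight S lam y * es [set u; v] y = K * Nt.
  by rewrite /Nt mulr_sumr; apply: eq_bigr => y _; rewrite wS mulrA.
have Dt0 : 0 < Dt.
  have : 0 < K * Dt by rewrite -DS; apply: sum_pos => y; exact: expR_gt0.
  by rewrite pmulr_rgt0.
have hwu : forall p, p \in L -> forall w, w \in p -> w != u.
  move=> p pL w wp; have /and3P[_ _ /andP[hu1 _]] := hL p pL.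
  by apply: contraNneq hu1 => <-.
have Dt' : Dt = \sum_x \prod_(p <- L) (1 + t ^+ size p * (sp x u * sp x v)).
  have hm1 := @multi R V t L u v (fun _ => 1) hL hdisj.
  rewrite /= in hm1.
  transitivity (\sum_x \prod_(p <- L) ppw t u p x * 1); first by apply: eq_bigr => x _; rewrite mulr1.
  rewrite hm1; first by apply: eq_bigr => x _; rewrite mulr1.
  by move=> p pL w wp wv; exact: indepC.
have Nt' : Nt = \sum_x \prod_(p <- L) (1 + t ^+ size p * (sp x u * sp x v)) * (sp x u * sp x v).
  have hm1 := @multi R V t L u v (fun x => sp x u * sp x v) hL hdisj.
  rewrite /= in hm1.
  rewrite /Nt; under eq_bigr do rewrite es_pair //.
  rewrite hm1 //.
  move=> p pL w wp wv; apply: indepM; apply: indep_sp.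
    by rewrite eq_sym (hwu p pL w wp).
  by rewrite eq_sym.
set c := 1 - 2 / (1 + (1 + t ^+ l) ^+ d / (1 - t ^+ l) ^+ d).
have hfin : c * Dt <= Nt.
  rewrite Dt' Nt'.
  have sL : size L = d by rewrite size_map size_enum_ord.
  rewrite /c -{1 2}sL.
  apply: final_bound => //.
    by apply/andP; split; [apply: exprn_ge0 | apply: exprn_ile1].
  move=> p /mapP[k _ ->]; apply/andP; split; last by apply: exprn_ile1.
  by apply: ler_wiXn2l => //; apply: hs.
set Aw := \sum_x ising_weight E lam x * es [set u; v] x.
set B := \sum_x ising_weight E lam x.
have B0 : 0 < B by apply: sum_pos => y; exact: expR_gt0.
have hm := mono_corr [set u; v] (ltW lam0) SE.
rewrite -/Aw -/B DS NS in hm.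
have h1 : B * Nt <= Aw * Dt.
  rewrite -subr_ge0; have : 0 <= K * (Aw * Dt - B * Nt).
    by have -> : K * (Aw * Dt - B * Nt) = Aw * (K * Dt) - B * (K * Nt) by ring.
  by rewrite pmulr_rge0.
have h2 : c * B * Dt <= B * Nt.
  by rewrite -mulrA mulrCA; apply: ler_wpM2l; [apply: ltW|].
have h3 : c * B <= Aw by rewrite -(ler_pM2r Dt0); apply: le_trans h2 h1.
have -> : \sum_x ising E lam x * es [set u; v] x = Aw / B.
  rewrite /Aw /B mulr_suml; apply: eq_bigr => x _.
  by rewrite /ising /partition_fn mulrAC.
by rewrite ler_pdivlMr.
Qed.

End Corr.
Section KLpart.
Variable R : realType.
Variable V : finType.
Local Notation cfg := {ffun V -> bool}.
Local Notation es := (@es R V).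

Definition Hm (E : {set {set V}}) (lam : R) (x : cfg) : R := \sum_(e in E) lam * es e x.

Lemma Z_pos (E : {set {set V}}) (lam : R) : 0 < partition_fn E lam.
Proof. by apply: sum_pos => x; exact: expR_gt0. Qed.

Lemma ising_pos (E : {set {set V}}) (lam : R) x : 0 < ising E lam x.
Proof. by rewrite /ising; apply: divr_gt0; [exact: expR_gt0 | exact: Z_pos]. Qed.

Lemma ising_sum1 (E : {set {set V}}) (lam : R) : \sum_x ising E lam x = 1.
Proof.
rewrite /ising -mulr_suml -/(partition_fn E lam) divff //.
by apply/eqP => h; have := Z_pos E lam; rewrite h ltxx.
Qed.

Lemma ln_ising (E : {set {set V}}) (lam : R) x :
  ln (ising E lam x) = Hm E lam x - ln (partition_fn E lam).
Proof.
rewrite /ising ln_div ?posrE ?expR_gt0 ?Z_pos //.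
by rewrite iwE expRK.
Qed.

Lemma ln_le (y : R) : 0 < y -> ln y <= y - 1.
Proof.
move=> y0; have := expR_ge1Dx (ln y); rewrite lnK ?posrE //; lra.
Qed.

Lemma KL_le (E E' : {set {set V}}) (lam : R) :
  KL (ising E lam) (ising E' lam) <=
  \sum_x (ising E lam x - ising E' lam x) * (Hm E lam x - Hm E' lam x).
Proof.
set f := ising E lam; set g := ising E' lam.
set C := ln (partition_fn E' lam) - ln (partition_fn E lam).
have hL : forall x, ln (f x / g x) = Hm E lam x - Hm E' lam x + C.
  move=> x; rewrite ln_div ?posrE ?ising_pos // !ln_ising /C; ring.
have hg : \sum_x g x * ln (f x / g x) <= 0.
  have : \sum_x g x * ln (f x / g x) <= \sum_x (f x - g x).
    apply: ler_sum => x _.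
    have gx := ising_pos E' lam x; have fx := ising_pos E lam x.
    have := ln_le (divr_gt0 fx gx) => h.
    have -> : f x - g x = g x * (f x / g x - 1) by rewrite /f /g; field; exact: lt0r_neq0.
    by apply: ler_wpM2l; [apply: ltW|].
  by rewrite sumrB /f /g !ising_sum1 subrr.
rewrite /KL -/f -/g.
apply: (le_trans (y := \sum_x f x * ln (f x / g x) - \sum_x g x * ln (f x / g x))).
  by lra.
rewrite -sumrB; under eq_bigr do rewrite hL.
have -> : \sum_x (f x * (Hm E lam x - Hm E' lam x + C) - g x * (Hm E lam x - Hm E' lam x + C)) =
  \sum_x (f x - g x) * (Hm E lam x - Hm E' lam x) + C * (\sum_x f x - \sum_x g x).
  rewrite sumrB mulrBr !mulr_sumr -!sumrB -big_split /=.
  by apply: eq_bigr => x _; ring.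
by rewrite /f /g !ising_sum1 subrr mulr0 addr0.
Qed.

Lemma Hm_diff (E E' : {set {set V}}) (lam : R) x :
  Hm E lam x - Hm E' lam x =
  \sum_(e in E :\: E') lam * es e x - \sum_(e in E' :\: E) lam * es e x.
Proof.
rewrite /Hm (big_setID E') [X in _ - X](big_setID E) finset.setIC /=; ring.
Qed.

Lemma sum_ising_es_le1 (E : {set {set V}}) (lam : R) e :
  \sum_x ising E lam x * es e x <= 1.
Proof.
rewrite -(ising_sum1 E lam); apply: ler_sum => x _.
have := ising_pos E lam x; have := es_le1 R e x; nra.
Qed.

Lemma edge_lb (E E' : {set {set V}}) (lam : R) l d e :
  0 < lam -> simple_graph E ->
  (forall u v : V, u != v -> [set u; v] \in E :\: E' -> ld_connected E' l d u v) ->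
  e \in E :\: E' ->
  1 - 2 / (1 + (1 + tanh lam ^+ l) ^+ d / (1 - tanh lam ^+ l) ^+ d) <=
  \sum_x ising E' lam x * es e x.
Proof.
move=> l0 sg hyp eD.
have eE : e \in E by move: eD; rewrite inE => /andP[].
have /cards2P [a [b [ab ee]]] : #|e| == 2%N by rewrite sg.
rewrite ee in eD *; apply: corr_lb => //.
exact: hyp.
Qed.

End KLpart.

Theorem corollary3 (R : realType) (V : finType) (E E' : {set {set V}})
  (lam : R) (l d : nat) :
  simple_graph E -> simple_graph E' -> 0 < lam ->
  (forall u v : V, u != v -> [set u; v] \in E :\: E' -> ld_connected E' l d u v) ->
  (forall u v : V, u != v -> [set u; v] \in E' :\: E -> ld_connected E l d u v) ->
  KL (ising E lam) (ising E' lam) <=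
    (2 * lam * #|symdiff E E'|%:R) /
    (1 + (1 + tanh lam ^+ l) ^+ d / (1 - tanh lam ^+ l) ^+ d).
Proof.
move=> sE sE' l0 h1 h2.
set rr := (1 + tanh lam ^+ l) ^+ d / (1 - tanh lam ^+ l) ^+ d.
have /andP[t0 t1] := tanh_bounds l0.
have tl0 : 0 <= tanh lam ^+ l by apply: exprn_ge0.
have tl1 : tanh lam ^+ l <= 1 by apply: exprn_ile1.
have rr0 : 0 <= rr by rewrite /rr; apply: divr_ge0; apply: exprn_ge0; lra.
set beta := 2 / (1 + rr).
apply: (le_trans (KL_le E E' lam)).
under eq_bigr do rewrite Hm_diff mulrBr !mulr_sumr.
rewrite sumrB exchange_big [X in _ - X]exchange_big /=.
have B1 : forall e, e \in E :\: E' ->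
  \sum_x (ising E lam x - ising E' lam x) * (lam * es R e x) <= lam * beta.
  move=> e eD.
  have -> : \sum_x (ising E lam x - ising E' lam x) * (lam * es R e x) =
     lam * (\sum_x ising E lam x * es R e x - \sum_x ising E' lam x * es R e x).
    by rewrite -sumrB mulr_sumr; apply: eq_bigr => x _; ring.
  apply: ler_wpM2l; first exact: ltW.
  have := sum_ising_es_le1 E lam e; have := edge_lb l0 sE h1 eD.
  rewrite /beta -/rr; lra.
have B2 : forall e, e \in E' :\: E ->
  - \sum_x (ising E lam x - ising E' lam x) * (lam * es R e x) <= lam * beta.
  move=> e eD.
  have -> : - \sum_x (ising E lam x - ising E' lam x) * (lam * es R e x) =
     lam * (\sum_x ising E' lam x * es R e x - \sum_x ising E lam x * es R e x).
    by rewrite -sumrB mulr_sumr -sumrN; apply: eq_bigr => x _; ring.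
  apply: ler_wpM2l; first exact: ltW.
  have := sum_ising_es_le1 E' lam e; have := edge_lb l0 sE' h2 eD.
  rewrite /beta -/rr; lra.
have S1 : \sum_(e in E :\: E') \sum_x (ising E lam x - ising E' lam x) * (lam * es R e x)
   <= \sum_(e in E :\: E') lam * beta by apply: ler_sum.
have S2 : \sum_(e in E' :\: E) - \sum_x (ising E lam x - ising E' lam x) * (lam * es R e x)
   <= \sum_(e in E' :\: E) lam * beta by apply: ler_sum.
rewrite sumrN !sumr_const in S2; rewrite sumr_const in S1.
have card : #|symdiff E E'| = (#|E :\: E'| + #|E' :\: E|)%N.
  rewrite -cardsUI.
  have -> : (E :\: E') :&: (E' :\: E) = finset.set0.
    by apply/setP => e; rewrite !inE; case: (e \in E); case: (e \in E').
  by rewrite cards0 addn0.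
rewrite card natrD.
have rr1 : 1 + rr != 0 by apply: lt0r_neq0; lra.
have -> : 2 * lam * (#|E :\: E'|%:R + #|E' :\: E|%:R) / (1 + rr) =
  lam * beta *+ #|E :\: E'| + lam * beta *+ #|E' :\: E| .
  by rewrite -(mulr_natr (lam * beta) #|E :\: E'|) -(mulr_natr (lam * beta) #|E' :\: E|) /beta; field.
exact: lerD S1 S2.
Qed.
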